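(* Every nonempty tiling $T$ contains a dense triple, i.e. a triple of the form $(j-1)\,j\,(j+1)$ for some $2\le j\le n-1$.
   Context: Fix an integer $n\ge 3$ and write $[n]=\{1,\dots,n\}$. Let $\Lambda$ be the set of 3-element subsets of $[n]$; a triple $\{i,j,k\}$ with $i<j<k$ is written $ijk$. For a 4-element subset $F=\{i<j<k<l\}$ of $[n]$, the stick of $F$ is the sequence $(ijk,\ ijl,\ ikl,\ jkl)$. A tiling (the inversion set of a rhombus tiling of the zonogon $Z(n;2)$) is a subset $T\subseteq\Lambda$ such that for every 4-element $F\subseteq[n]$, $T\cap\mathrm{stick}(F)$ is an initial segment or a final segment of the stick (empty set and whole stick allowed). *)

(* Defs.v *)
From mathcomp Require Import all_boot.
Set Implicit Arguments. Unset Strict Implicit. Unset Printing Implicit Defensive.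

(* A triple ijk with i<j<k is encoded as (i, j, k) : nat * nat * nat. *)
Definition triple := (nat * nat * nat)%type.

Definition in_Lambda (n : nat) (t : triple) : bool :=
  let: (i, j, k) := t in [&& 1 <= i, i < j, j < k & k <= n].

Definition stick (i j k l : nat) : seq triple :=
  [:: (i, j, k); (i, j, l); (i, k, l); (j, k, l)].

Definition init_or_final_segment (T : pred triple) (s : seq triple) : Prop :=
  exists m, m <= size s /\
    ((forall p, p < size s -> (nth (0,0,0) s p \in T) = (p < m)) \/
     (forall p, p < size s -> (nth (0,0,0) s p \in T) = (m <= p))).

Definition tiling (n : nat) (T : pred triple) : Prop :=
  (forall t, t \in T -> in_Lambda n t) /\
  (forall i j k l, 1 <= i -> i < j -> j < k -> k < l -> l <= n ->
     init_or_final_segment T (stick i j k l)).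

(* Main.v *)
Require Import Defs.
From mathcomp Require Import all_boot.
From mathcomp Require Import zify.

Lemma seg_pos (T : pred triple) s q : init_or_final_segment T s -> q < size s ->
  nth (0,0,0) s q \in T ->
  (forall p, p <= q -> nth (0,0,0) s p \in T) \/
  (forall p, q <= p -> p < size s -> nth (0,0,0) s p \in T).
Proof.
case=> m [_ [H|H]] Hq Hin; [left|right].
- move=> p Hp; rewrite H; last by lia.
  by move: Hin; rewrite H //; lia.
- move=> p Hp Hp'; rewrite H //.
  by move: Hin; rewrite H //; lia.
Qed.

Lemma key n (T : pred triple) : tiling n T -> forall w i j k, k - i <= w ->
  (i, j, k) \in T -> exists j, [/\ 2 <= j, j <= n.-1 & (j.-1, j, j.+1) \in T].
Proof.
move=> [HL HS]; elim=> [|w IH] i j k Hw Hin; have := HL _ Hin => /= /and4P [H1 H2 H3 H4].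
  lia.
case: (boolP (k - i == 2)) => [/eqP E|E].
  exists j; split; try lia.
  have -> : j.-1 = i by lia.
  by have -> : j.+1 = k by lia.
case: (boolP (2 <= j - i)) => Eji.
  have St := HS i i.+1 j k H1 (ltnSn _) ltac:(lia) H3 H4.
  case: (@seg_pos T _ 2 St isT Hin) => [Hl|Hr].
    by apply: (IH i i.+1 j); [lia| exact: (Hl 0 isT)].
  by apply: (IH i.+1 j k); [lia| exact: (Hr 3 isT isT)].
have St := HS i j j.+1 k H1 H2 (ltnSn _) ltac:(lia) H4.
case: (@seg_pos T _ 1 St isT Hin) => [Hl|Hr].
  by apply: (IH i j j.+1); [lia| exact: (Hl 0 isT)].
by apply: (IH j j.+1 k); [lia| exact: (Hr 3 isT isT)].
Qed.

Theorem lemma3 (n : nat) (T : pred triple) :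
  3 <= n -> tiling n T -> (exists t, t \in T) ->
  exists j, [/\ 2 <= j, j <= n.-1 & (j.-1, j, j.+1) \in T].
Proof.
move=> _ HT [[[i j] k] Hin].
exact: (@key n T HT (k - i) i j k (leqnn _) Hin).
Qed.
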